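(* Let $k\ge 1$ and let $P_{4k}$ be the path with vertices labeled $1,2,\dots,4k$ consecutively along the path. For $v\in\{1,\dots,4k\}$, $$TDV(v)=\begin{cases}0 & \text{if } v\equiv 0,1 \pmod 4,\\ 1 & \text{if } v\equiv 2,3 \pmod 4.\end{cases}$$
   Context: A set $D \subseteq V(G)$ is a total dominating set of a graph $G$ if every vertex of $G$ has a neighbor in $D$. $\gamma_t(G)$ is the minimum cardinality of a total dominating set; a minimum one is a $\gamma_t(G)$-set. $TDV(v)$ is the number of $\gamma_t(P_{4k})$-sets containing $v$. *)

(* Defs.v *)
From mathcomp Require Import all_boot.
Set Implicit Arguments. Unset Strict Implicit. Unset Printing Implicit Defensive.

(* The path P_n on vertex type 'I_n; ordinal i stands for the vertex labeled i+1. *)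
Definition path_adj (n : nat) (i j : 'I_n) : bool :=
  (i.+1 == j :> nat) || (j.+1 == i :> nat).

Definition total_dominating (n : nat) (D : {set 'I_n}) : bool :=
  [forall v : 'I_n, [exists u in D, path_adj v u]].

Definition gamma_t_set (n : nat) (D : {set 'I_n}) : bool :=
  total_dominating D &&
  [forall E : {set 'I_n}, total_dominating E ==> (#|D| <= #|E|)].

Definition TDV (n : nat) (v : 'I_n) : nat :=
  #|[set D : {set 'I_n} | gamma_t_set D && (v \in D)]|.

(* Main.v *)
Require Import Defs.
From mathcomp Require Import all_boot.
From mathcomp Require Import zify.
Set Implicit Arguments. Unset Strict Implicit. Unset Printing Implicit Defensive.

Section S.
Variable n : nat.

Definition em (E : {set 'I_n}) (m : nat) : bool := [exists x in E, nat_of_ord x == m].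

Lemma emE E (x : 'I_n) : em E x = (x \in E).
Proof.
apply/existsP/idP => [[y /andP[yE /eqP/val_inj <-]] //|xE].
by exists x; rewrite xE eqxx.
Qed.

Lemma em_lt E m : em E m -> m < n.
Proof. by case/existsP=> y /andP[_ /eqP <-]. Qed.

Lemma td_em E : total_dominating E ->
  forall v, v < n -> exists u, em E u /\ (v.+1 = u \/ u.+1 = v).
Proof.
move=> /forallP H v vn; have /existsP[u /andP[uE ad]] := H (Ordinal vn).
exists u; split; first by rewrite emE.
by case/orP: ad => /eqP /= ->; [left|right].
Qed.

Lemma em_td E : (forall v, v < n -> exists u, em E u /\ (v.+1 = u \/ u.+1 = v)) ->
  total_dominating E.
Proof.
move=> H; apply/forallP => v; have [u [/existsP[x /andP[xE /eqP xu]] ad]] := H v (ltn_ord v).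
apply/existsP; exists x; rewrite xE /path_adj xu.
by case: ad => ->; rewrite eqxx ?orbT.
Qed.

Lemma card_em (E : {set 'I_n}) : #|E| = \sum_(0 <= m < n) em E m.
Proof.
rewrite big_mkord -sum1_card big_mkcond /=.
by apply: eq_bigr => x _; rewrite emE; case: (x \in E).
Qed.
End S.

Lemma sum_blocks (f : nat -> nat) k :
  \sum_(0 <= m < 4 * k) f m =
  \sum_(0 <= j < k) (f (4*j) + f (4*j+1) + f (4*j+2) + f (4*j+3)).
Proof.
elim: k => [|k IH]; first by rewrite muln0 !big_geq.
rewrite [RHS]big_nat_recr //= -IH.
have -> : 4 * k.+1 = (4*k+3).+1 by lia.
rewrite big_nat_recr //=.
have -> : 4 * k + 3 = (4*k+2).+1 by lia.
rewrite big_nat_recr //=.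
have -> : 4 * k + 2 = (4*k+1).+1 by lia.
rewrite big_nat_recr //=.
have -> : 4 * k + 1 = (4*k).+1 by lia.
rewrite big_nat_recr //=.
lia.
Qed.

Lemma sum_ge2 (g : nat -> nat) k : (forall j, j < k -> 2 <= g j) ->
  2 * k <= \sum_(0 <= j < k) g j.
Proof.
elim: k => [|k IH] H; first by rewrite muln0.
rewrite big_nat_recr //=.
have := IH (fun j jk => H j (ltnW jk)); have := H k (ltnSn k); lia.
Qed.

Lemma sum_eq2 (g : nat -> nat) k : (forall j, j < k -> 2 <= g j) ->
  \sum_(0 <= j < k) g j = 2 * k -> forall j, j < k -> g j = 2.
Proof.
elim: k => [|k IH] H S j jk; first by [].
move: S; rewrite big_nat_recr //= => S.
have H' : forall j, j < k -> 2 <= g j by move=> i ik; apply: H; lia.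
have := sum_ge2 H'; have := H k (ltnSn k) => h1 h2.
have Sk : \sum_(0 <= j < k) g j = 2 * k by lia.
have gk : g k = 2 by lia.
case: (ltngtP j k) => [jk'||->] //; first exact: IH.
lia.
Qed.

Section Main.
Variables (k : nat) (e : nat -> bool).
Hypothesis hk : 1 <= k.
Hypothesis H1 : forall m, e m -> m < 4 * k.
Hypothesis H2 : forall v, v < 4 * k -> exists u, e u /\ (v.+1 = u \/ u.+1 = v).

Lemma halfA j : j < k -> 1 <= e (4*j) + e (4*j+2).
Proof.
move=> jk; have [u [eu [Hu|Hu]]] := H2 (v := 4*j+1) ltac:(lia).
- have -> : 4*j+2 = u by lia. rewrite eu; lia.
- have -> : 4*j = u by lia. rewrite eu; lia.
Qed.

Lemma halfB j : j < k -> 1 <= e (4*j+1) + e (4*j+3).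
Proof.
move=> jk; have [u [eu [Hu|Hu]]] := H2 (v := 4*j+2) ltac:(lia).
- have -> : 4*j+3 = u by lia. rewrite eu; lia.
- have -> : 4*j+1 = u by lia. rewrite eu; lia.
Qed.

Lemma block_ge2 j : j < k -> 2 <= e (4*j) + e (4*j+1) + e (4*j+2) + e (4*j+3).
Proof. move=> jk; have := halfA jk; have := halfB jk; lia. Qed.

Hypothesis Hb : forall j, j < k -> e (4*j) + e (4*j+1) + e (4*j+2) + e (4*j+3) = 2.

Lemma xA j : j < k -> e (4*j) + e (4*j+2) = 1.
Proof. move=> jk; have := halfA jk; have := halfB jk; have := Hb jk; lia. Qed.
Lemma xB j : j < k -> e (4*j+1) + e (4*j+3) = 1.
Proof. move=> jk; have := halfA jk; have := halfB jk; have := Hb jk; lia. Qed.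

Lemma no0 : forall d j, j + d = k.-1 -> e (4*j) -> False.
Proof.
elim=> [|d IH] j jd ej.
- have jk : j < k by lia.
  have e2 : e (4*j+2) = false by have := xA jk; rewrite ej; lia.
  have [u [eu [Hu|Hu]]] := H2 (v := 4*j+3) ltac:(lia).
  + have := H1 eu; lia.
  + have uj : u = 4*j+2 by lia. by rewrite uj e2 in eu.
- have jk : j < k by lia.
  have e2 : e (4*j+2) = false by have := xA jk; rewrite ej; lia.
  have [u [eu [Hu|Hu]]] := H2 (v := 4*j+3) ltac:(lia).
  + apply: (IH j.+1); first by lia.
    have -> : 4 * j.+1 = u by lia. exact: eu.
  + have uj : u = 4*j+2 by lia. by rewrite uj e2 in eu.
Qed.

Lemma no3 : forall j, j < k -> e (4*j+3) -> False.
Proof.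
elim=> [|j IH] jk ej.
- have e1 : e 1 = false by have := xB jk; rewrite muln0 !add0n ej; lia.
  have [u [eu [Hu|Hu]]] := H2 (v := 0) ltac:(lia).
  + by rewrite -Hu e1 in eu.
  + by [].
- have e1 : e (4*j.+1+1) = false by have := xB jk; rewrite ej; lia.
  have [u [eu [Hu|Hu]]] := H2 (v := 4*j.+1) ltac:(lia).
  + have uj : u = 4*j.+1+1 by lia. by rewrite uj e1 in eu.
  + apply: (IH ltac:(lia)). have -> : 4 * j + 3 = u by lia. exact: eu.
Qed.

Lemma e_char m : e m = (m < 4 * k) && ((m %% 4 == 1) || (m %% 4 == 2)).
Proof.
case: (ltnP m (4*k)) => mk; last first.
  by apply/negbTE/negP => /H1; lia.
set j := m %/ 4.
have jk : j < k by rewrite /j; lia.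
have mj : m = 4 * j + m %% 4 by rewrite /j; lia.
have := xA jk; have := xB jk.
have n0 : e (4*j) = false by apply/negbTE/negP => /(no0 (d := k.-1 - j)) H; apply: H; lia.
have n3 : e (4*j+3) = false by apply/negbTE/negP => /(no3 jk).
rewrite n0 n3 /= => hB hA.
have : m %% 4 < 4 by apply: ltn_pmod.
case Hr: (m %% 4) => [|[|[|[|r]]]] _ //; rewrite mj Hr ?addn0 ?n0 ?n3.
all: try lia.
Qed.
End Main.

Theorem corollary5p2 (k : nat) (hk : 1 <= k) (i : 'I_(4 * k)) :
  let v := i.+1 in
  TDV i = (if (v %% 4 == 0) || (v %% 4 == 1) then 0 else 1).
Proof.
move=> v.
pose D0 := [set x : 'I_(4*k) | (x %% 4 == 1) || (x %% 4 == 2)].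
have emD0 m : em D0 m = (m < 4 * k) && ((m %% 4 == 1) || (m %% 4 == 2)).
  case: (ltnP m (4*k)) => mk.
    by rewrite (emE D0 (Ordinal mk)) inE.
  by apply/negbTE/negP => /em_lt; lia.
have tdD0 : total_dominating D0.
  apply: em_td => w wk.
  case: (boolP ((w %% 4 == 0) || (w %% 4 == 1))) => hw.
  - exists w.+1; split; last by left.
    rewrite emD0; apply/andP; split; lia.
  - exists w.-1; split; last by right; lia.
    rewrite emD0; apply/andP; split; lia.
have cD0 : #|D0| = 2 * k.
  rewrite card_em (sum_blocks (fun m => nat_of_bool (em D0 m))).
  rewrite (eq_big_nat _ _ (F2 := fun _ => 2)); last first.
    move=> j /andP[_ jk]; rewrite !emD0.
    have h0 : ((4*j) %% 4 == 1) || ((4*j) %% 4 == 2) = false by lia.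
    have h1 : ((4*j+1) %% 4 == 1) || ((4*j+1) %% 4 == 2) by lia.
    have h2 : ((4*j+2) %% 4 == 1) || ((4*j+2) %% 4 == 2) by lia.
    have h3 : ((4*j+3) %% 4 == 1) || ((4*j+3) %% 4 == 2) = false by lia.
    rewrite h0 h1 h2 h3 !andbF !andbT.
    have -> : 4 * j + 1 < 4 * k by lia.
    have -> : 4 * j + 2 < 4 * k by lia.
    by [].
  by rewrite sum_nat_const_nat subn0 mulnC.
have lower (E : {set 'I_(4*k)}) : total_dominating E -> 2 * k <= #|E|.
  move=> tdE; rewrite card_em (sum_blocks (fun m => nat_of_bool (em E m))); apply: sum_ge2 => j jk.
  exact: (block_ge2 hk (td_em tdE)).
have gchar (E : {set 'I_(4*k)}) : gamma_t_set E = (E == D0).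
  apply/idP/eqP => [/andP[tdE /forallP mE]|->]; last first.
    by rewrite /gamma_t_set tdD0 /=; apply/forallP => F; apply/implyP => /lower; rewrite cD0.
  have cE : #|E| = 2 * k.
    have := implyP (mE D0) tdD0; have := lower E tdE; rewrite cD0; lia.
  have Hb : forall j, j < k ->
      em E (4*j) + em E (4*j+1) + em E (4*j+2) + em E (4*j+3) = 2.
    apply: (sum_eq2 (g := fun j => em E (4*j) + em E (4*j+1) + em E (4*j+2) + em E (4*j+3))).
      move=> j jk; exact: (block_ge2 hk (td_em tdE)).
    by rewrite -(sum_blocks (fun m => nat_of_bool (em E m))) -card_em.
  apply/setP => x; rewrite -emE (e_char hk (@em_lt _ E) (td_em tdE) Hb) inE ltn_ord.
  by [].
rewrite /TDV.
have -> : [set D : {set 'I_(4*k)} | gamma_t_set D && (i \in D)] =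
          if i \in D0 then [set D0] else set0.
  apply/setP => D; rewrite [in LHS]inE gchar.
  case: (boolP (D == D0)) => [/eqP ->|nD]; case: (boolP (i \in D0)) => hi;
    rewrite ?hi ?in_set1 ?in_set0 ?eqxx ?(negbTE nD) //.
case: (boolP (i \in D0)) => hi; rewrite ?cards1 ?cards0;
  move: hi; rewrite inE /v; case: ifP; lia.
Qed.
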